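(* Let $n\ge1$ and let $\mathcal{C}^n\subset M_{\mathbb{R}}/2\pi M$ be the coamoeba of the pair of pants $\mathcal{P}^n$. Then $\mathcal{C}^n$ is the complement of the image, under the quotient map $M_{\mathbb{R}}\to M_{\mathbb{R}}/2\pi M$, of the interior of $\pi Z_n$.
   Context: Let $\widetilde{M}=\mathbb{Z}\langle e_1,\dots,e_{n+2}\rangle$, $e_{[n+2]}=e_1+\dots+e_{n+2}$, $M=\widetilde{M}/\langle e_{[n+2]}\rangle$, $M_{\mathbb{R}}=M\otimes\mathbb{R}$. Identify $M_{\mathbb{C}^*}=M\otimes\mathbb{C}^*$ with $\mathbb{CP}^{n+1}\setminus\bigcup_j\{z_j=0\}$, and let $\mathrm{Arg}\colon M_{\mathbb{C}^*}\to M_{\mathbb{R}}/2\pi M$ be induced by $(z_1,\dots,z_{n+2})\mapsto(\arg z_1,\dots,\arg z_{n+2})$. The pair of pants is $\mathcal{P}^n=\{\sum_j z_j=0\}\subset M_{\mathbb{C}^*}$, and its coamoeba $\mathcal{C}^n$ is the closure of $\mathrm{Arg}(\mathcal{P}^n)$. The zonotope is $Z_n=\{\sum_j\theta_je_j:\theta_j\in[0,1]\}\subset M_{\mathbb{R}}$; interior is taken in $M_{\mathbb{R}}$. *)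

(* Defs.v *)
From HB Require Import structures.
From mathcomp Require Import all_boot all_order all_algebra.
From mathcomp Require Import all_classical all_reals all_analysis.
Set Implicit Arguments. Unset Strict Implicit. Unset Printing Implicit Defensive.
Import Order.TTheory GRing.Theory Num.Theory.
Local Open Scope ring_scope.

(* Points of R^{n+2} = M~ (x) R, coordinates indexed by 'I_(n+2). *)
Definition vec (R : realType) (n : nat) := 'I_n.+2 -> R.

(* Equivalence whose quotient is M_R = R^{n+2} / R(1,...,1). *)
Definition mr_equiv (R : realType) (n : nat) (a b : vec R n) : Prop :=
  exists c : R, forall j, b j = a j + c.

(* Equivalence whose quotient is the torus M_R / 2 pi M,
   i.e. R^{n+2} / (R(1,...,1) + 2 pi Z^{n+2}). *)
Definition torus_equiv (R : realType) (n : nat) (a b : vec R n) : Prop :=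
  exists (c : R) (k : 'I_n.+2 -> int),
    forall j, b j = a j + c + 2 * pi * (k j)%:~R.

Definition open_vec (R : realType) (n : nat) (U : vec R n -> Prop) : Prop :=
  forall a, U a -> exists2 e : R, 0 < e &
    forall b, (forall j, `|b j - a j| < e) -> U b.

Definition saturated (R : realType) (n : nat)
  (E : vec R n -> vec R n -> Prop) (U : vec R n -> Prop) : Prop :=
  forall a b, E a b -> U a -> U b.

(* Subsets of a quotient R^{n+2}/E are represented by their (saturated)
   preimages in R^{n+2}; open sets of the quotient topology are the
   saturated open sets.  [qclosure E S] is the preimage of the closure
   (in the quotient topology) of the image of S. *)
Definition qclosure (R : realType) (n : nat)
  (E : vec R n -> vec R n -> Prop) (S : vec R n -> Prop) (a : vec R n) : Prop :=
  forall U, open_vec U -> saturated E U -> U a ->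
    exists b c, U b /\ S c /\ E c b.

(* [qinterior E S] is the preimage of the interior (in the quotient
   topology) of the image of the E-saturated set S. *)
Definition qinterior (R : realType) (n : nat)
  (E : vec R n -> vec R n -> Prop) (S : vec R n -> Prop) (a : vec R n) : Prop :=
  exists U, [/\ open_vec U, saturated E U, U a & forall b, U b -> S b].

(* phi is an argument vector of z = (x_j + i y_j)_j : z_j <> 0 and
   z_j = |z_j| (cos phi_j + i sin phi_j). *)
Definition is_arg_vec (R : realType) (n : nat) (x y phi : vec R n) : Prop :=
  forall j, (x j != 0 \/ y j != 0) /\
    x j = Num.sqrt (x j ^+ 2 + y j ^+ 2) * cos (phi j) /\
    y j = Num.sqrt (x j ^+ 2 + y j ^+ 2) * sin (phi j).

(* Preimage in R^{n+2} of Arg(P^n) : the points of M_R/2piM of the form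
   Arg(z), z = [z_1 : ... : z_{n+2}] in (C^* )^{n+2}/C^* with sum z_j = 0. *)
Definition argP (R : realType) (n : nat) (a : vec R n) : Prop :=
  exists x y phi : vec R n,
    [/\ \sum_j x j = 0, \sum_j y j = 0, is_arg_vec x y phi &
        torus_equiv phi a].

(* Preimage in R^{n+2} of the coamoeba C^n = closure of Arg(P^n)
   in M_R / 2 pi M. *)
Definition coamoeba (R : realType) (n : nat) : vec R n -> Prop :=
  qclosure (@torus_equiv R n) (@argP R n).

(* Preimage in R^{n+2} of pi Z_n = { sum_j pi t_j e_j : t_j in [0,1] } in M_R. *)
Definition piZonotope (R : realType) (n : nat) (a : vec R n) : Prop :=
  exists t : vec R n, (forall j, 0 <= t j <= 1) /\
    mr_equiv (fun j => pi * t j) a.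

(* Preimage in R^{n+2} of the image in M_R/2piM of the interior
   (taken in M_R) of pi Z_n. *)
Definition zonotope_image (R : realType) (n : nat) (a : vec R n) : Prop :=
  exists b, qinterior (@mr_equiv R n) (@piZonotope R n) b /\
    torus_equiv b a.

(* Main.v *)
Require Import Defs.
From HB Require Import structures.
From mathcomp Require Import all_boot all_order all_algebra.
From mathcomp Require Import all_classical all_reals all_analysis.
From mathcomp Require Import ring lra.
Import Order.TTheory GRing.Theory Num.Theory.
Import numFieldNormedType.Exports.
Local Open Scope ring_scope.


Lemma sin_pern (R : realType) (x : R) (m : nat) : sin (x + 2 * pi * m%:R) = sin x.
Proof.
elim: m => [|m IH]; first by rewrite mulr0 addr0.
have -> : x + 2 * pi * m.+1%:R = (x + 2 * pi * m%:R) + pi *+ 2.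
  by rewrite -natr1 mulr2n; ring.
by rewrite sinD2pi.
Qed.

Lemma sin_per (R : realType) (x : R) (k : int) : sin (x + 2 * pi * k%:~R) = sin x.
Proof.
case: k => m; first exact: sin_pern.
rewrite NegzE.
have {2}-> : x = (x + 2 * pi * (- (m.+1%:Z))%:~R) + 2 * pi * m.+1%:R.
  by rewrite mulrNz; ring.
by rewrite sin_pern.
Qed.

Lemma sum_pos (R : realType) (n : nat) (F : 'I_n.+2 -> R) :
  (forall j, 0 < F j) -> 0 < \sum_j F j.
Proof.
move=> HF; rewrite (bigD1 ord0) //=.
apply: (lt_le_trans (HF ord0)); rewrite lerDl.
by apply: sumr_ge0 => j _; apply: ltW.
Qed.

Lemma sqr_pos (R : realType) (x y : R) : (x != 0 \/ y != 0) -> 0 < x ^+ 2 + y ^+ 2.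
Proof.
have hx := sqr_ge0 x; have hy := sqr_ge0 y.
case=> h.
- have : 0 < x ^+ 2 by rewrite lt_def sqrf_eq0 h hx.
  lra.
- have : 0 < y ^+ 2 by rewrite lt_def sqrf_eq0 h hy.
  lra.
Qed.

Lemma argP_sin (R : realType) (n : nat) (a : vec R n) :
  argP a -> forall d, exists j, sin (a j + d) <= 0.
Proof.
move=> [x [y [phi [Sx Sy Harg [c [k Hk]]]]]] d.
case: (pselect (exists j, sin (a j + d) <= 0)) => // /forallNP Hn; exfalso.
have Hp : forall j, 0 < sin (a j + d).
  by move=> j; move: (Hn j); rewrite leNgt => /negP; rewrite negbK.
set D := c + d.
have key : forall j, Num.sqrt (x j ^+ 2 + y j ^+ 2) * sin (a j + d)
    = y j * cos D + x j * sin D.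
  move=> j; have [_ [hx hy]] := Harg j.
  rewrite Hk (_ : phi j + c + 2 * pi * (k j)%:~R + d = (phi j + D) + 2 * pi * (k j)%:~R); last by rewrite /D; ring.
  rewrite sin_per sinD.
  set rho := Num.sqrt _ in hx hy *.
  rewrite [in RHS]hx [in RHS]hy; ring.
have : 0 < \sum_j Num.sqrt (x j ^+ 2 + y j ^+ 2) * sin (a j + d).
  apply: sum_pos => j; apply: mulr_gt0 => //.
  by rewrite sqrtr_gt0; apply: sqr_pos; case: (Harg j).
under eq_bigr do rewrite key.
by rewrite big_split /= -!mulr_suml Sx Sy !mul0r addr0 ltxx.
Qed.
Lemma sin_pos_red (R : realType) (t : R) : 0 < sin t ->
  exists k : int, 0 < t + 2 * pi * k%:~R < pi.
Proof.
move=> hs.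
have p0 := pi_gt0 R.
set q := t / (2 * pi).
exists (- Num.floor q).
have := floor_itv q; rewrite intrD /= => /andP [h1 h2].
have e : t = q * (2 * pi) by rewrite /q mulfVK //; lra.
set f := (Num.floor q)%:~R in h1 h2 *.
rewrite mulrNz.
have hlo : 0 <= t + 2 * pi * - f by rewrite e; nra.
have hhi : t + 2 * pi * - f < 2 * pi by rewrite e; nra.
have hs' : 0 < sin (t + 2 * pi * - f).
  by rewrite /f -mulrNz sin_per.
apply/andP; split.
  rewrite lt_def hlo andbT; apply/eqP => h0.
  by move: hs'; rewrite h0 sin0 ltxx.
rewrite ltNge; apply/negP => hpi.
have : 0 <= sin (t + 2 * pi * - f - pi).
  by apply: sin_ge0_pi; apply/andP; split; lra.
rewrite (_ : t + 2 * pi * - f = (t + 2 * pi * - f - pi) + pi) in hs'; last by ring.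
move: hs'; rewrite sinDpi.
set u := sin _; lra.
Qed.

Definition strip (R : realType) (n : nat) (v : vec R n) : Prop :=
  exists c, forall j, 0 < v j + c < pi.

Lemma open_strip (R : realType) (n : nat) : open_vec (@strip R n).
Proof.
move=> v [c hc].
pose m j := Num.min (v j + c) (pi - (v j + c)).
pose e := \big[Num.min/1]_j m j.
have me : forall j, e <= m j by move=> j; exact: bigmin_le.
exists e.
  rewrite /e; apply: lt_bigmin => // j _.
  have := hc j; rewrite /m lt_min; move=> /andP [h1 h2].
  by rewrite h1 /=; lra.
move=> b hb; exists c => j.
have := me j; have := hb j; rewrite /m le_min => h /andP [h1 h2].
move: h; rewrite ltr_norml => /andP [h3 h4].
apply/andP; split; lra.
Qed.

Lemma strip_qint (R : realType) (n : nat) (b : vec R n) :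
  (forall j, 0 < b j < pi) -> qinterior (@mr_equiv R n) (@piZonotope R n) b.
Proof.
move=> hb.
have p0 := pi_gt0 R.
exists (@strip R n); split.
- exact: open_strip.
- move=> v w [c' hw] [c hc]; exists (c - c') => j.
  by rewrite hw; have := hc j; rewrite (_ : v j + c' + (c - c') = v j + c) //; ring.
- by exists 0 => j; rewrite addr0.
- move=> v [c hc]; exists (fun j => (v j + c) / pi); split.
    move=> j; have /andP [h1 h2] := hc j.
    apply/andP; split; first by apply: divr_ge0; lra.
    by rewrite ler_pdivrMr //; lra.
  exists (- c) => j; rewrite mulrC mulfVK; first by ring.
  by apply/eqP => h; move: p0; rewrite h ltxx.
Qed.

Lemma zimage_of_sin (R : realType) (n : nat) (a : vec R n) :
  (exists d, forall j, 0 < sin (a j + d)) -> zonotope_image a.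
Proof.
move=> [d hd].
have hk : forall j, exists k : int, 0 < a j + d + 2 * pi * k%:~R < pi.
  by move=> j; apply: sin_pos_red.
pose k j := projT1 (cid (hk j)).
have hkP : forall j, 0 < a j + d + 2 * pi * (k j)%:~R < pi.
  by move=> j; rewrite /k; case: cid.
exists (fun j => a j + d + 2 * pi * (k j)%:~R); split.
  exact: strip_qint.
exists (- d), (fun j => - k j) => j.
rewrite mulrNz; ring.
Qed.


Lemma qint_sin (R : realType) (n : nat) (b : vec R n) :
  qinterior (@mr_equiv R n) (@piZonotope R n) b ->
  exists d, forall j, 0 < sin (b j + d).
Proof.
move=> [U [oU sU Ub sub]].
have p0 := pi_gt0 R.
have [e e0 he] := oU b Ub.
have [t [ht [c hc]]] := sub b Ub.
set eps := e / pi.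
have eps0 : 0 < eps by apply: divr_gt0.
have epsE : eps * pi = e by rewrite /eps mulfVK //; lra.
pose p := fun j => b j + eps * (pi * t j - pi / 2).
have Up : U p.
  apply: he => j; rewrite /p addrC addKr.
  have /andP [h1 h2] := ht j.
  rewrite normrM gtr0_norm // -epsE ltr_pM2l // ltr_norml.
  apply/andP; split; nra.
have [t2 [ht2 [g hg]]] := sub p Up.
exists (- (g - c) / (1 + eps) - c) => j.
have key : (b j + (- (g - c) / (1 + eps) - c)) * (1 + eps)
    = pi * t2 j + eps * pi / 2.
  have := hg j; rewrite /p hc.
  move=> hj.
  have -> : pi * t2 j = pi * t j + c + eps * (pi * t j - pi / 2) - g.
    by rewrite hj; ring.
  rewrite -?epsE; field; apply/eqP => h; lra.
apply: sin_gt0_pi.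
have /andP [h1 h2] := ht2 j.
set X := b j + _ in key *.
apply/andP; split; nra.
Qed.


Lemma te_sym (R : realType) (n : nat) (a b : vec R n) :
  torus_equiv a b -> torus_equiv b a.
Proof.
move=> [c [k hk]]; exists (- c), (fun j => - k j) => j.
by rewrite hk mulrNz; ring.
Qed.

Lemma te_trans (R : realType) (n : nat) (a b c : vec R n) :
  torus_equiv a b -> torus_equiv b c -> torus_equiv a c.
Proof.
move=> [c1 [k1 h1]] [c2 [k2 h2]]; exists (c1 + c2), (fun j => k1 j + k2 j) => j.
by rewrite h2 h1 intrD; ring.
Qed.

Lemma te_refl (R : realType) (n : nat) (a : vec R n) : torus_equiv a a.
Proof. by exists 0, (fun _ => 0) => j; rewrite addr0 mulr0 addr0. Qed.

Lemma argP_sat (R : realType) (n : nat) : saturated (@torus_equiv R n) (@argP R n).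
Proof.
move=> a b hab [x [y [phi [h1 h2 h3 h4]]]].
by exists x, y, phi; split => //; apply: te_trans hab.
Qed.

Definition zimg_set (R : realType) (n : nat) (v : vec R n) : Prop :=
  exists b, qinterior (@mr_equiv R n) (@piZonotope R n) b /\ torus_equiv b v.

Lemma open_zimg (R : realType) (n : nat) : open_vec (@zimg_set R n).
Proof.
move=> v [b [[U [oU sU Ub sub]] [c [k hk]]]].
have [e e0 he] := oU b Ub.
exists e => // w hw.
exists (fun j => w j - c - 2 * pi * (k j)%:~R); split.
  exists U; split => //.
  apply: he => j; move: (hw j); rewrite hk.
  by rewrite (_ : w j - c - 2 * pi * (k j)%:~R - b j = w j - (b j + c + 2 * pi * (k j)%:~R)) //; ring.
by exists c, k => j; ring.
Qed.

Lemma sat_zimg (R : realType) (n : nat) : saturated (@torus_equiv R n) (@zimg_set R n).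
Proof.
move=> v w hvw [b [hb hbv]]; exists b; split => //; exact: te_trans hbv hvw.
Qed.


Lemma sq2_eq0 (R : realType) (a b : R) : a ^+ 2 + b ^+ 2 = 0 -> a = 0 /\ b = 0.
Proof.
move/eqP; rewrite paddr_eq0 ?sqr_ge0 // !sqrf_eq0 => /andP [/eqP -> /eqP ->] //.
Qed.

Lemma ext_U {R : realType} {I : finType} (c s : I -> R) :
  (exists k, 0 < s k) ->
  exists K, 0 < s K /\ forall m, 0 < s m -> 0 <= c m * s K - s m * c K.
Proof.
move=> [k0 hk0].
pose P := [pred k | 0 < s k].
have Pk0 : P k0 by [].
case: (arg_minP (fun k => c k / s k) Pk0) => K PK hK.
exists K; split => // m hm.
have := hK m hm; rewrite /= ler_pdivrMr // mulrAC ler_pdivlMr //.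
nra.
Qed.

Section Alg.
Variables (R : realType) (I : finType) (i0 : I) (c s : I -> R).
Hypotheses (c0 : c i0 = 1) (s0 : s i0 = 0) (un : forall m, c m ^+ 2 + s m ^+ 2 = 1).
Let det j k := c j * s k - s j * c k.
Hypothesis NT : forall j k l, ~ [/\ 0 < det j k, 0 < det k l & 0 < det l j].
Hypothesis NA : forall j k, ~ (c k = - c j /\ s k = - s j).

Lemma alg_P0 m : s m = 0 -> c m = 1.
Proof.
move=> hm; have := un m; rewrite hm expr0n /= addr0 => /eqP; rewrite sqrf_eq1.
case/orP => /eqP // h; exfalso; apply: (NA i0 m); rewrite c0 s0 h hm; split => //.
by rewrite oppr0.
Qed.

Lemma alg_Q k l : 0 < s k -> s l < 0 -> det k l < 0.
Proof.
move=> hk hl.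
have nt := NT i0 k l.
have h1 : 0 < det i0 k by rewrite /det c0 s0; lra.
have h2 : 0 < det l i0 by rewrite /det c0 s0; lra.
have hle : det k l <= 0 by rewrite leNgt; apply/negP => h; apply: nt.
rewrite lt_neqAle hle andbT; apply/eqP => h0.
set p := c k * c l + s k * s l.
have lag : p ^+ 2 + det k l ^+ 2 = 1.
  have := un k; have := un l; rewrite /p /det => e1 e2.
  rewrite -[1]mulr1 -{1}e1 -e2; ring.
move: lag; rewrite h0 expr0n /= addr0 => /eqP; rewrite sqrf_eq1 => /orP [] /eqP hp.
- have : (c k - c l) ^+ 2 + (s k - s l) ^+ 2 = 0.
    have := un k; have := un l; move: hp; rewrite /p => hp e1 e2.
    rewrite (_ : (c k - c l) ^+ 2 + (s k - s l) ^+ 2 = (c k ^+ 2 + s k ^+ 2) + (c l ^+ 2 + s l ^+ 2) - 2 * (c k * c l + s k * s l)); last by ring.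
    by rewrite e1 e2 hp; ring.
  move/sq2_eq0 => [_ hs]; lra.
- apply: (NA k l).
  have : (c k + c l) ^+ 2 + (s k + s l) ^+ 2 = 0.
    have := un k; have := un l; move: hp; rewrite /p => hp e1 e2.
    rewrite (_ : (c k + c l) ^+ 2 + (s k + s l) ^+ 2 = (c k ^+ 2 + s k ^+ 2) + (c l ^+ 2 + s l ^+ 2) + 2 * (c k * c l + s k * s l)); last by ring.
    by rewrite e1 e2 hp; ring.
  move/sq2_eq0 => [h3 h4]; split; lra.
Qed.

Lemma alg_main : exists al be : R, forall m, 0 < al * c m + be * s m.
Proof.
have gen : forall K L, (forall m, 0 < det m K + det L m) ->
    exists al be : R, forall m, 0 < al * c m + be * s m.
  move=> K L h; exists (s K - s L), (c L - c K) => m.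
  by have := h m; rewrite /det (_ : (s K - s L) * c m + (c L - c K) * s m = c m * s K - s m * c K + (c L * s m - s L * c m)) //; ring.
case: (pselect (exists k, 0 < s k)) => hU; case: (pselect (exists l, s l < 0)) => hL.
- have [K [hK eK]] := ext_U c s hU.
  have [L [hL' eL]] : exists L, s L < 0 /\ forall m, s m < 0 -> 0 <= det L m.
    have [|L [h1 h2]] := ext_U c (fun m => - s m).
      by case: hL => l hl; exists l; lra.
    exists L; split; first lra.
    by move=> m hm; have := h2 m (ltac:(lra)); rewrite /det; lra.
  apply: (gen K L) => m.
  case: (ltrgtP (s m) 0) => hm.
  + have := alg_Q K m hK hm; have := eL m hm; rewrite /det; lra.
  + have := alg_Q m L hm hL'; have := eK m hm; rewrite /det; lra.
  + rewrite /det (alg_P0 m hm) hm; lra.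
- have [K [hK eK]] := ext_U c s hU.
  apply: (gen K i0) => m.
  case: (ltrgtP (s m) 0) => hm.
  + by exfalso; apply: hL; exists m.
  + have := eK m hm; rewrite /det c0 s0; lra.
  + rewrite /det (alg_P0 m hm) hm c0 s0; lra.
- have [L [hL' eL]] : exists L, s L < 0 /\ forall m, s m < 0 -> 0 <= det L m.
    have [|L [h1 h2]] := ext_U c (fun m => - s m).
      by case: hL => l hl; exists l; lra.
    exists L; split; first lra.
    by move=> m hm; have := h2 m (ltac:(lra)); rewrite /det; lra.
  apply: (gen i0 L) => m.
  case: (ltrgtP (s m) 0) => hm.
  + have := eL m hm; rewrite /det c0 s0; lra.
  + by exfalso; apply: hU; exists m.
  + rewrite /det (alg_P0 m hm) hm c0 s0; lra.
- exists 1, 0 => m.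
  case: (ltrgtP (s m) 0) => hm.
  + by exfalso; apply: hL; exists m.
  + by exfalso; apply: hU; exists m.
  + by rewrite (alg_P0 m hm); lra.
Qed.
End Alg.


Local Open Scope classical_set_scope.
Lemma small_delta (R : realType) (e sg k : R) : 0 < e -> 0 < sg ->
  exists d : R, [/\ 0 < d, d < e, d < pi / 2 & 0 < sg * cos d + k * sin d].
Proof.
move=> e0 sg0.
have cf : sg * cos x + k * sin x @[x --> (0:R)] --> sg * cos 0 + k * sin 0.
  apply: cvgD; apply: cvgMr; [exact: continuous_cos | exact: continuous_sin].
rewrite cos0 sin0 mulr1 mulr0 addr0 in cf.
have hn : \forall t \near (0:R), 0 < sg * cos t + k * sin t by apply: (cvgr_gt sg cf 0 sg0).
have [r r0 hr] := iffLR (nbhs_ballP _ _) hn.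
have p0 := pi_gt0 R.
pose d := Num.min (Num.min e (pi / 2)) r / 2.
have hm : 0 < Num.min (Num.min e (pi / 2)) r.
  by rewrite !lt_min e0 r0 /= andbT; lra.
have h1 : Num.min (Num.min e (pi / 2)) r <= e by rewrite !ge_min lexx.
have h2 : Num.min (Num.min e (pi / 2)) r <= pi / 2 by rewrite !ge_min lexx orbT.
have h3 : Num.min (Num.min e (pi / 2)) r <= r by rewrite !ge_min lexx orbT.
exists d; split; rewrite /d; try lra.
apply: hr; rewrite /ball /= sub0r normrN ger0_norm; lra.
Qed.


Local Close Scope classical_set_scope.
Lemma sum_delta (R : realType) (N : nat) (j : 'I_N) (f : 'I_N -> R) :
  \sum_m (m == j)%:R * f m = f j.
Proof.
rewrite (bigD1 j) //= eqxx mul1r big1 ?addr0 // => i /negbTE ->; by rewrite mul0r.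
Qed.

Lemma triple_argP (R : realType) (n : nat) (a : vec R n) (j k l : 'I_n.+2) :
  0 < sin (a k - a j) -> 0 < sin (a l - a k) -> 0 < sin (a j - a l) -> argP a.
Proof.
set x := fun m => cos (a m); set y := fun m => sin (a m).
rewrite !sinB -/(x j) -/(x k) -/(x l) -/(y j) -/(y k) -/(y l).
set Djk := y k * x j - x k * y j; set Dkl := y l * x k - x l * y k;
set Dlj := y j * x l - x j * y l => hjk hkl hlj.
set S1 := \sum_m x m; set S2 := \sum_m y m.
set al := (- S1 * y k + S2 * x k) / Djk.
set be := (- x j * S2 + y j * S1) / Djk.
have Djk0 : Djk != 0 by rewrite gt_eqF.
have ex : al * x j + be * x k = - S1.
  by move: Djk0; rewrite /al /be /Djk => D0; field.
have ey : al * y j + be * y k = - S2.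
  by move: Djk0; rewrite /al /be /Djk => D0; field.
set T1 := (al ^+ 2 + 1) / Dkl; set T2 := (be ^+ 2 + 1) / Dlj.
have eT1 : T1 * Dkl = al ^+ 2 + 1 by rewrite /T1 mulfVK // gt_eqF.
have eT2 : T2 * Dlj = be ^+ 2 + 1 by rewrite /T2 mulfVK // gt_eqF.
have T10 : 0 < T1 by apply: divr_gt0 => //; have := sqr_ge0 al; lra.
have T20 : 0 < T2 by apply: divr_gt0 => //; have := sqr_ge0 be; lra.
set T := T1 + T2.
set rj := al + T * Dkl; set rk := be + T * Dlj; set rl := T * Djk.
have rj0 : 0 < rj.
  rewrite /rj /T mulrDl eT1; have : 0 < T2 * Dkl by apply: mulr_gt0.
  have := sqr_ge0 (al + 1/2); nra.
have rk0 : 0 < rk.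
  rewrite /rk /T mulrDl eT2; have : 0 < T1 * Dlj by apply: mulr_gt0.
  have := sqr_ge0 (be + 1/2); nra.
have rl0 : 0 < rl by apply: mulr_gt0 => //; rewrite /T; lra.
pose r := fun m : 'I_n.+2 => 1 + (m == j)%:R * rj + (m == k)%:R * rk + (m == l)%:R * rl.
have r0 : forall m, 0 < r m.
  move=> m; rewrite /r.
  have h1 : 0 <= (m == j)%:R * rj by apply: mulr_ge0; [rewrite ler0n | lra].
  have h2 : 0 <= (m == k)%:R * rk by apply: mulr_ge0; [rewrite ler0n | lra].
  have h3 : 0 <= (m == l)%:R * rl by apply: mulr_ge0; [rewrite ler0n | lra].
  lra.
have sumr : forall f : 'I_n.+2 -> R,
    \sum_m r m * f m = \sum_m f m + rj * f j + rk * f k + rl * f l.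
  move=> f.
  have e : forall m, r m * f m = f m + (m == j)%:R * (rj * f m) + (m == k)%:R * (rk * f m) + (m == l)%:R * (rl * f m).
    by move=> m; rewrite /r; ring.
  under eq_bigr do rewrite e.
  by rewrite !big_split /= !sum_delta.
have hid : forall f : 'I_n.+2 -> R, Dkl * f j + Dlj * f k + Djk * f l = 0 ->
    \sum_m r m * f m = \sum_m f m + (al * f j + be * f k).
  move=> f h; rewrite sumr /rj /rk /rl.
  have -> : \sum_m f m + (al + T * Dkl) * f j + (be + T * Dlj) * f k + T * Djk * f l
     = \sum_m f m + (al * f j + be * f k) + T * (Dkl * f j + Dlj * f k + Djk * f l) by ring.
  by rewrite h mulr0 addr0.
have Sx : \sum_m r m * x m = 0.
  by rewrite hid ?ex /S1 ?subrr // /Dkl /Dlj /Djk; ring.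
have Sy : \sum_m r m * y m = 0.
  by rewrite hid ?ey /S2 ?subrr // /Dkl /Dlj /Djk; ring.
exists (fun m => r m * x m), (fun m => r m * y m), a; split => //; last first.
  by exists 0, (fun _ => 0) => m; rewrite addr0 mulr0 addr0.
move=> m; have rm := r0 m.
have e : (r m * x m) ^+ 2 + (r m * y m) ^+ 2 = r m ^+ 2.
  by rewrite -[RHS]mulr1 -(cos2Dsin2 (a m)) /x /y; ring.
rewrite e sqrtr_sqr gtr0_norm //; split => //.
have := cos2Dsin2 (a m); rewrite -/(x m) -/(y m) => u.
have rn : r m != 0 by rewrite gt_eqF.
case: (eqVneq (x m) 0) => hx; last by left; apply: mulf_neq0.
right; apply: mulf_neq0 => //; apply/eqP => hy.
by move: u; rewrite hx hy expr0n /= addr0 => /eqP; rewrite eq_sym oner_eq0.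
Qed.


Lemma angle_exists (R : realType) (p q : R) : p ^+ 2 + q ^+ 2 = 1 ->
  exists d, sin d = p /\ cos d = q.
Proof.
move=> h.
have hq : -1 <= q <= 1 by apply/andP; split; nra.
have cq : cos (acos q) = q by rewrite acosK // in_itv /=.
have sq : sin (acos q) = `|p|.
  by rewrite sin_acos // (_ : 1 - q ^+ 2 = p ^+ 2) ?sqrtr_sqr //; lra.
case: (lerP 0 p) => hp.
- by exists (acos q); rewrite cq sq ger0_norm.
- by exists (- acos q); rewrite sinN cosN cq sq ltr0_norm // opprK.
Qed.


Lemma comb (R : realType) (n : nat) (a : vec R n) :
  (forall d, exists j, sin (a j + d) <= 0) ->
  (exists j k l, [/\ 0 < sin (a k - a j), 0 < sin (a l - a k) & 0 < sin (a j - a l)])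
  \/ (exists j k, sin (a k - a j) = 0 /\ cos (a k - a j) = -1).
Proof.
move=> H.
case: (pselect (exists j k l, [/\ 0 < sin (a k - a j), 0 < sin (a l - a k) & 0 < sin (a j - a l)])) => [h|NT]; first by left.
case: (pselect (exists j k, sin (a k - a j) = 0 /\ cos (a k - a j) = -1)) => [h|NA]; first by right.
exfalso.
set a0 := a ord0.
pose c m := cos (a m - a0); pose s m := sin (a m - a0).
have detE : forall j k, c j * s k - s j * c k = sin (a k - a j).
  move=> j k; rewrite (_ : a k - a j = (a k - a0) - (a j - a0)); last by ring.
  by rewrite sinB /c /s; ring.
have c0 : c ord0 = 1 by rewrite /c subrr cos0.
have s0 : s ord0 = 0 by rewrite /s subrr sin0.
have un : forall m, c m ^+ 2 + s m ^+ 2 = 1 by move=> m; exact: cos2Dsin2.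
have NT' : forall j k l, ~ [/\ 0 < c j * s k - s j * c k, 0 < c k * s l - s k * c l
      & 0 < c l * s j - s l * c j].
  move=> j k l; rewrite !detE => h; apply: NT; exists j, k, l; exact: h.
have NA' : forall j k, ~ (c k = - c j /\ s k = - s j).
  move=> j k [h1 h2]; apply: NA; exists j, k; split.
    by rewrite -detE h1 h2; ring.
  rewrite (_ : a k - a j = (a k - a0) - (a j - a0)); last by ring.
  rewrite cosB -/(c k) -/(s k) -/(c j) -/(s j) h1 h2.
  have := un j; lra.
have [al [be hw]] := @alg_main R _ ord0 c s c0 s0 un NT' NA'.
set W1 := al * cos a0 - be * sin a0; set W2 := al * sin a0 + be * cos a0.
have wE : forall m, al * c m + be * s m = W1 * cos (a m) + W2 * sin (a m).
  by move=> m; rewrite /c /s cosB sinB /W1 /W2; ring.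
have Wpos : 0 < W1 ^+ 2 + W2 ^+ 2.
  apply: sqr_pos.
  case: (eqVneq W1 0) => h1; last by left.
  right; apply/eqP => h2; have := hw ord0; rewrite wE h1 h2; lra.
set rho := Num.sqrt (W1 ^+ 2 + W2 ^+ 2).
have rho0 : 0 < rho by rewrite sqrtr_gt0.
have [d [sd cd]] : exists d, sin d = W1 / rho /\ cos d = W2 / rho.
  apply: angle_exists.
  rewrite !expr_div_n sqr_sqrtr ?ltW // -mulrDl mulfV //.
  by rewrite gt_eqF.
have [j hj] := H d.
have := hw j; rewrite wE.
move: hj; rewrite sinD sd cd.
have -> : sin (a j) * (W2 / rho) + cos (a j) * (W1 / rho)
    = (W1 * cos (a j) + W2 * sin (a j)) / rho.
  clearbody rho W1 W2.
  by ring.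
rewrite pmulr_lle0 ?invr_gt0 //; lra.
Qed.


Definition upd {R : realType} {n : nat} (f : vec R n) (i : 'I_n.+2) (v : R) : vec R n :=
  fun m => if m == i then v else f m.

Lemma sin_small_pos (R : realType) (d : R) : 0 < d -> d < pi / 2 -> 0 < sin d.
Proof. by move=> h1 h2; apply: sin_gt0_pi; apply/andP; split; have := pi_gt0 R; lra. Qed.

Lemma sin_small_pos2 (R : realType) (d : R) : 0 < d -> d < pi / 2 -> 0 < sin (d + d).
Proof. by move=> h1 h2; apply: sin_gt0_pi; apply/andP; split; have := pi_gt0 R; lra. Qed.

Lemma caseA (R : realType) (n : nat) (a : vec R n) (e : R) (j k l : 'I_n.+2) :
  0 < e -> k != j -> l != j ->
  sin (a k - a j) = 0 -> cos (a k - a j) = -1 -> 0 < sin (a l - a j) ->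
  exists b : vec R n, (forall m, `|b m - a m| < e) /\ argP b.
Proof.
move=> e0 hkj hlj s1 c1 sp.
have [d [d0 de dp hd]] := @small_delta R e _ (cos (a l - a j)) e0 sp.
pose b := upd a j (a j - d).
have bj : b j = a j - d by rewrite /b /upd eqxx.
have bk : b k = a k by rewrite /b /upd (negbTE hkj).
have bl : b l = a l by rewrite /b /upd (negbTE hlj).
exists b; split.
  move=> m; rewrite /b /upd; case: (m =P j) => [->|_]; last by rewrite subrr normr0.
  by rewrite (_ : a j - d - a j = - d) ?normrN ?gtr0_norm //; ring.
apply: (@triple_argP R n b j l k).
- rewrite bl bj (_ : a l - (a j - d) = (a l - a j) + d); last by ring.
  by rewrite sinD.
- rewrite bk bl (_ : a k - a l = (a k - a j) - (a l - a j)); last by ring.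
  by rewrite sinB s1 c1; lra.
- rewrite bj bk (_ : a j - d - a k = - ((a k - a j) + d)); last by ring.
  rewrite sinN sinD s1 c1; have := @sin_small_pos R d d0 dp; lra.
Qed.

Lemma caseB (R : realType) (n : nat) (a : vec R n) (e : R) (j k l : 'I_n.+2) :
  0 < e -> k != j -> l != j ->
  sin (a k - a j) = 0 -> cos (a k - a j) = -1 -> sin (a l - a j) < 0 ->
  exists b : vec R n, (forall m, `|b m - a m| < e) /\ argP b.
Proof.
move=> e0 hkj hlj s1 c1 sp.
have sp' : 0 < - sin (a l - a j) by lra.
have [d [d0 de dp hd]] := @small_delta R e _ (cos (a l - a j)) e0 sp'.
pose b := upd a j (a j + d).
have bj : b j = a j + d by rewrite /b /upd eqxx.
have bk : b k = a k by rewrite /b /upd (negbTE hkj).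
have bl : b l = a l by rewrite /b /upd (negbTE hlj).
exists b; split.
  move=> m; rewrite /b /upd; case: (m =P j) => [->|_]; last by rewrite subrr normr0.
  by rewrite (_ : a j + d - a j = d) ?gtr0_norm //; ring.
apply: (@triple_argP R n b j k l).
- rewrite bk bj (_ : a k - (a j + d) = (a k - a j) - d); last by ring.
  rewrite sinB s1 c1; have := @sin_small_pos R d d0 dp; lra.
- rewrite bl bk (_ : a l - a k = (a l - a j) - (a k - a j)); last by ring.
  by rewrite sinB s1 c1; lra.
- rewrite bj bl (_ : a j + d - a l = d - (a l - a j)); last by ring.
  by rewrite sinB; lra.
Qed.

Lemma caseC (R : realType) (n : nat) (a : vec R n) (e : R) (j k l : 'I_n.+2) :
  0 < e -> k != j -> l != j -> l != k ->
  sin (a k - a j) = 0 -> cos (a k - a j) = -1 ->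
  sin (a l - a j) = 0 -> cos (a l - a j) = 1 ->
  exists b : vec R n, (forall m, `|b m - a m| < e) /\ argP b.
Proof.
move=> e0 hkj hlj hlk s1 c1 s2 c2.
have p0 := pi_gt0 R.
pose d := Num.min e (pi / 2) / 2.
have hm : 0 < Num.min e (pi / 2) by rewrite lt_min e0 /=; lra.
have h1 : Num.min e (pi / 2) <= e by rewrite ge_min lexx.
have h2 : Num.min e (pi / 2) <= pi / 2 by rewrite ge_min lexx orbT.
have d0 : 0 < d by rewrite /d; lra.
have de : d < e by rewrite /d; lra.
have dp : d < pi / 2 by rewrite /d; lra.
pose b := upd (upd a j (a j - d)) l (a l + d).
have bj : b j = a j - d by rewrite /b /upd eq_sym (negbTE hlj) eqxx.
have bk : b k = a k by rewrite /b /upd (negbTE hkj) eq_sym (negbTE hlk).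
have bl : b l = a l + d by rewrite /b /upd eqxx.
exists b; split.
  move=> m; rewrite /b /upd; case: (m =P l) => [->|_].
    by rewrite (_ : a l + d - a l = d) ?gtr0_norm //; ring.
  case: (m =P j) => [->|_]; last by rewrite subrr normr0.
  by rewrite (_ : a j - d - a j = - d) ?normrN ?gtr0_norm //; ring.
have sd := @sin_small_pos R d d0 dp.
apply: (@triple_argP R n b j l k).
- rewrite bl bj (_ : a l + d - (a j - d) = (a l - a j) + (d + d)); last by ring.
  rewrite sinD s2 c2; have := @sin_small_pos2 R d d0 dp; lra.
- rewrite bk bl (_ : a k - (a l + d) = ((a k - a j) - (a l - a j)) - d); last by ring.
  rewrite sinB (sinB (a k - a j)) (cosB (a k - a j)) s1 c1 s2 c2; lra.
- rewrite bj bk (_ : a j - d - a k = - ((a k - a j) + d)); last by ring.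
  rewrite sinN sinD s1 c1; lra.
Qed.

Lemma third (n : nat) (hn : (1 <= n)%N) (j k : 'I_n.+2) :
  exists l : 'I_n.+2, l != j /\ l != k.
Proof.
pose l0 : 'I_n.+2 := inord 0; pose l1 : 'I_n.+2 := inord 1; pose l2 : 'I_n.+2 := inord 2.
have v0 : nat_of_ord l0 = 0%N by rewrite /l0 inordK.
have v1 : nat_of_ord l1 = 1%N by rewrite /l1 inordK.
have v2 : nat_of_ord l2 = 2%N by rewrite /l2 inordK // ltnS.
case: (boolP ((l0 != j) && (l0 != k))) => [/andP [h1 h2]|]; first by exists l0.
case: (boolP ((l1 != j) && (l1 != k))) => [/andP [h1 h2]|]; first by exists l1.
case: (boolP ((l2 != j) && (l2 != k))) => [/andP [h1 h2]|]; first by exists l2.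
rewrite !negb_and !negbK => /orP [] /eqP e2 /orP [] /eqP e1 /orP [] /eqP e0;
  rewrite ?e0 ?e1 ?e2 in v0 v1 v2; congruence.
Qed.

Lemma perturb (R : realType) (n : nat) (hn : (1 <= n)%N) (a : vec R n) (e : R)
  (j k : 'I_n.+2) : 0 < e -> sin (a k - a j) = 0 -> cos (a k - a j) = -1 ->
  exists b : vec R n, (forall m, `|b m - a m| < e) /\ argP b.
Proof.
move=> e0 s1 c1.
have hkj : k != j.
  by apply/eqP => h; move: c1; rewrite h subrr cos0; lra.
have [l [hlj hlk]] := @third n hn j k.
case: (ltrgtP (sin (a l - a j)) 0) => hs.
- exact: caseB hkj hlj s1 c1 hs.
- exact: caseA hkj hlj s1 c1 hs.
- have := cos2Dsin2 (a l - a j); rewrite hs expr0n /= addr0 => /eqP.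
  rewrite sqrf_eq1 => /orP [] /eqP hc.
  + exact: caseC hkj hlj hlk s1 c1 hs hc.
  + have hjk : j != k by rewrite eq_sym.
    apply: (@caseC R n a e k j l e0 hjk hlk hlj).
    * by rewrite (_ : a j - a k = - (a k - a j)) ?sinN ?s1 ?oppr0 //; ring.
    * by rewrite (_ : a j - a k = - (a k - a j)) ?cosN ?c1 //; ring.
    * rewrite (_ : a l - a k = (a l - a j) - (a k - a j)); last by ring.
      by rewrite sinB hs hc s1 c1; ring.
    * rewrite (_ : a l - a k = (a l - a j) - (a k - a j)); last by ring.
      by rewrite cosB hs hc s1 c1; ring.
Qed.


Theorem proposition2p4 (R : realType) (n : nat) (hn : (1 <= n)%N) :
  forall a : vec R n, coamoeba a <-> ~ zonotope_image a.
Proof.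
move=> a; split.
- move=> hc hz.
  have [b0 [c0 [Ub0 [Ac0 E]]]] := hc _ (@open_zimg R n) (@sat_zimg R n) hz.
  case: Ub0 => b' [hq hb'].
  have Ab' : argP b' := @argP_sat R n _ _ (@te_trans R n _ _ _ E (@te_sym R n _ _ hb')) Ac0.
  have [d hd] := @qint_sin R n _ hq.
  have [j hj] := @argP_sin R n _ Ab' d.
  by have := hd j; lra.
- move=> hz U oU sU Ua.
  have H : forall d, exists j, sin (a j + d) <= 0.
    move=> d; case: (pselect (exists j, sin (a j + d) <= 0)) => // /forallNP hn'.
    exfalso; apply: hz; apply: (@zimage_of_sin R n); exists d => j.
    by move: (hn' j); rewrite leNgt => /negP; rewrite negbK.
  have [e e0 he] := oU a Ua.
  have [b [hb Ab]] : exists b : vec R n, (forall m, `|b m - a m| < e) /\ argP b.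
    case: (@comb R n a H) => [[j [k [l [h1 h2 h3]]]]|[j [k [s1 c1]]]].
    + exists a; split; first by move=> m; rewrite subrr normr0.
      exact: (@triple_argP R n a j k l h1 h2 h3).
    + exact: (@perturb R n hn a e j k e0 s1 c1).
  exists b, b; split; first exact: he.
  by split => //; apply: (@te_refl R n).
Qed.
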